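(* Let $\mathcal{C}$ be a class of $\Sigma$-algebras, let $X \subseteq \dot\Sigma$ be a finite set, and let $<$ be a well-founded binary relation on $X^*$ such that (i) $<$ is compatible with concatenation ($w < w'$ implies $u w v < u w' v$ for all $u,v\in X^*$), and (ii) $<$ has no infinite antichains. Then the following are equivalent: (1) there is a finite set $\{(u_i, w_i) \mid i \in I\}$ of pairs of words in $X^*$ with $u_i < w_i$ and $u_i\ \dot\sim_{\mathcal{C}}\ w_i$ for all $i$, such that the language $X^*\big(\bigcup_{i\in I} w_i\big)X^*$ over the alphabet $X$ is cofinite (its complement in $X^*$ is finite); (2) $X^*/{\dot\sim_{\mathcal{C}}}$ is finite.
   Context: $\Sigma$ is a finite algebraic signature and $V$ a non-empty finite set of variables; $\Sigma$-terms over $V$, and $\Sigma$-algebras have non-empty finite universes; $t \sim_{\mathcal{C}} s$ iff $t,s$ evaluate equally under all valuations in all algebras in $\mathcal{C}$. $\mathrm{vo}(t)$ is the number of variable occurrences in $t$. $\dot\Sigma$ is the set of characters $f(t_1,\dots,t_{i-1},\_,t_{i+1},\dots,t_n)$ where $f\in\Sigma$ is $n$-ary, $i\in\{1,\dots,n\}$, and each $t_j$ ($j\ne i$) has $\mathrm{vo}(t_j)=0$. For a word $w\in\dot\Sigma^*$, $w[t]$ is defined by $\varepsilon[t]=t$ and $(f(t_1,\dots,\_,\dots,t_n)\,w')[t] = f(t_1,\dots,t_{i-1},w'[t],t_{i+1},\dots,t_n)$. $w\ \dot\sim_{\mathcal{C}}\ w'$ iff $w[a]\sim_{\mathcal{C}}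 w'[a]$ for any variable $a\in V$. *)

(* Defs.v *)
From mathcomp Require Import all_boot.
Set Implicit Arguments. Unset Strict Implicit. Unset Printing Implicit Defensive.

Inductive term (F : Type) (ar : F -> nat) (V : Type) : Type :=
  | Var of V
  | App (f : F) of ('I_(ar f) -> term ar V).
Arguments Var {F ar V} _.
Arguments App {F ar V} f _.

Fixpoint vo F (ar : F -> nat) V (t : term ar V) : nat :=
  match t with
  | Var _ => 1
  | App f ts => \sum_(j < ar f) vo (ts j)
  end.

(* Sigma-algebras with non-empty finite universe *)
Record algebra (F : Type) (ar : F -> nat) : Type := Algebra {
  carrier : finType;
  some_elt : carrier;
  ops : forall f : F, ('I_(ar f) -> carrier) -> carrier }.

Fixpoint eval F (ar : F -> nat) V (A : algebra ar) (val : V -> carrier A)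
    (t : term ar V) : carrier A :=
  match t with
  | Var v => val v
  | App f ts => @ops F ar A f (fun j => eval val (ts j))
  end.

Definition sim F (ar : F -> nat) V (C : algebra ar -> Prop) (t s : term ar V) :=
  forall A : algebra ar, C A -> forall val : V -> carrier A, eval val t = eval val s.

(* characters f(t_1,..,t_{i-1},_,t_{i+1},..,t_n) with ground t_j *)
Record char F (ar : F -> nat) V : Type := Char {
  cf : F;
  ci : 'I_(ar cf);
  cargs : 'I_(ar cf) -> term ar V;
  cground : forall j, j != ci -> vo (cargs j) = 0 }.

Definition plug F (ar : F -> nat) V (c : char ar V) (t : term ar V) : term ar V :=
  App (cf c) (fun j => if j == @ci F ar V c then t else @cargs F ar V c j).

(* w[t] for a word w over an alphabet Al interpreted by chr : Al -> char *)
Definition wapp F (ar : F -> nat) V (Al : Type) (chr : Al -> char ar V)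
    (w : seq Al) (t : term ar V) : term ar V :=
  foldr (fun a acc => plug (chr a) acc) t w.

Definition wsim F (ar : F -> nat) V (C : algebra ar -> Prop) (Al : Type)
    (chr : Al -> char ar V) (w w' : seq Al) :=
  forall a : V, sim C (wapp chr w (Var a)) (wapp chr w' (Var a)).

(* Main.v *)
Require Import Defs.
From mathcomp Require Import all_boot.
From Stdlib Require Import Classical ClassicalEpsilon FunctionalExtensionality.

Set Implicit Arguments. Unset Strict Implicit. Unset Printing Implicit Defensive.

Section S.
Variables (F : finType) (ar : F -> nat) (V : finType).

Lemma ground_eval (A : algebra ar) (t : term ar V) :
  vo t = 0 -> forall val val' : V -> carrier A, eval val t = eval val' t.
Proof.
elim: t => [v|f ts IH] //= H val val'.
congr (@ops _ _ _ _ _); apply: functional_extensionality => j.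
apply: IH; move: H; rewrite (bigD1 j) //=; by move/eqP; rewrite addn_eq0 => /andP[/eqP].
Qed.

Variable (C : algebra ar -> Prop) (Al : finType) (chr : Al -> char ar V).

Lemma sim_refl (t : term ar V) : sim C t t. Proof. by []. Qed.
Lemma sim_sym (t s : term ar V) : sim C t s -> sim C s t.
Proof. by move=> H A CA val; rewrite H. Qed.
Lemma sim_trans (t s r : term ar V) : sim C t s -> sim C s r -> sim C t r.
Proof. by move=> H1 H2 A CA val; rewrite H1 ?H2. Qed.

Lemma wsim_sym w w' : wsim C chr w w' -> wsim C chr w' w.
Proof. by move=> H a; apply: sim_sym. Qed.
Lemma wsim_trans w w' w'' : wsim C chr w w' -> wsim C chr w' w'' -> wsim C chr w w''.
Proof. by move=> H1 H2 a; apply: sim_trans (H1 a) (H2 a). Qed.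

Lemma sim_outer u (s s' : term ar V) : sim C s s' -> sim C (wapp chr u s) (wapp chr u s').
Proof.
move=> H; elim: u => [|c u IH] //= A CA val.
rewrite /plug /=; congr (@ops _ _ _ _ _); apply: functional_extensionality => j.
by case: (j == ci (chr c)) => //; apply: IH.
Qed.

Lemma eval_subst (A : algebra ar) (val : V -> carrier A) w s a :
  eval val (wapp chr w s) = eval (fun _ => eval val s) (wapp chr w (Var a)).
Proof.
elim: w => [|c w IH] //=.
rewrite /plug /=; congr (@ops _ _ _ _ _); apply: functional_extensionality => j.
case: eqP => [_|/eqP ne]; first exact: IH.
exact: ground_eval (cground ne) _ _.
Qed.

Lemma wsim_congr u v w w' : wsim C chr w w' ->
  wsim C chr (u ++ w ++ v) (u ++ w' ++ v).
Proof.
move=> H a; rewrite /wapp !foldr_cat; apply: sim_outer => A CA val.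
by rewrite -!/(wapp _ _ _) (eval_subst val w _ a) (eval_subst val w' _ a) H.
Qed.

Variable lt : seq Al -> seq Al -> Prop.
Definition red w := exists u, lt u w /\ wsim C chr u w.

Hypothesis lt_noanti : forall f : nat -> seq Al, injective f ->
      exists i j, i <> j /\ lt (f i) (f j).

Lemma fin_class r : exists L : seq (seq Al), forall w, ~ red w -> wsim C chr w r -> w \in L.
Proof.
apply: NNPP => Hn.
have H : forall L : seq (seq Al), exists w, ~ red w /\ wsim C chr w r /\ w \notin L.
  move=> L; apply: NNPP => H1; apply: Hn; exists L => w H2 H3.
  apply: NNPP => H4; apply: H1; exists w; split => //; split => //; exact/negP.
pose g L := proj1_sig (constructive_indefinite_description _ (H L)).
have gP L : ~ red (g L) /\ wsim C chr (g L) r /\ g L \notin L.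
  exact: (proj2_sig (constructive_indefinite_description _ (H L))).
pose fix l n := if n is m.+1 then g (l m) :: l m else [::].
pose f n := g (l n).
have inl i j : (i < j)%N -> f i \in l j.
  elim: j => // j IH; rewrite ltnS leq_eqVlt => /orP[/eqP->|/IH h] /=;
  by rewrite in_cons ?eqxx ?h ?orbT.
have finj : injective f.
  move=> i j E; case: (ltngtP i j) => // h.
  - have := inl _ _ h; rewrite E; by case: (gP (l j)) => _ [_ /negP].
  - have := inl _ _ h; rewrite -E; by case: (gP (l i)) => _ [_ /negP].
have [i [j [_ hl]]] := lt_noanti finj.
case: (gP (l j)) => hr [hs _]; apply: hr; exists (f i); split => //.
apply: wsim_trans (wsim_sym hs); exact: (proj1 (proj2 (gP (l i)))).
Qed.

Lemma fin_irr (reps : seq (seq Al)) :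
  exists L : seq (seq Al), forall w, ~ red w -> (exists2 r, r \in reps & wsim C chr w r) -> w \in L.
Proof.
elim: reps => [|r reps [L IH]]; first by exists [::] => w _ [].
have [L1 H1] := fin_class r.
exists (L1 ++ L) => w hw [r' ]; rewrite in_cons mem_cat => /orP[/eqP->|hr] hs.
  by rewrite H1.
by rewrite IH ?orbT //; exists r'.
Qed.

Lemma mkP (cand : seq (seq Al)) : exists P : seq (seq Al * seq Al),
  (forall p, p \in P -> lt p.1 p.2 /\ wsim C chr p.1 p.2) /\
  (forall c, c \in cand -> red c -> exists2 p, p \in P & p.2 = c).
Proof.
elim: cand => [|c cand [P [H1 H2]]]; first by exists [::].
case: (classic (red c)) => [[u [hu hs]]|hn].
  exists ((u, c) :: P); split.
    by move=> p; rewrite in_cons => /orP[/eqP->|/H1].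
  move=> c'; rewrite in_cons => /orP[/eqP-> _|hc hr]; first by exists (u, c); rewrite ?in_cons ?eqxx.
  have [p hp e] := H2 _ hc hr; exists p => //; by rewrite in_cons hp orbT.
exists P; split => // c'; rewrite in_cons => /orP[/eqP-> //|]; exact: H2.
Qed.

End S.

Theorem lemma2p15 (F : finType) (ar : F -> nat) (V : finType) (v0 : V)
  (C : algebra ar -> Prop)
  (Al : finType) (chr : Al -> char ar V) (chr_inj : injective chr)
  (lt : seq Al -> seq Al -> Prop)
  (lt_wf : well_founded lt)
  (lt_compat : forall u v w w', lt w w' -> lt (u ++ w ++ v) (u ++ w' ++ v))
  (lt_noanti : forall f : nat -> seq Al, injective f ->
      exists i j, i <> j /\ lt (f i) (f j)) :
  (exists P : seq (seq Al * seq Al),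
      (forall p, p \in P -> lt p.1 p.2 /\ wsim C chr p.1 p.2) /\
      exists E : seq (seq Al),
        forall x : seq Al, (forall p, p \in P -> ~~ infix p.2 x) -> x \in E)
  <->
  (exists reps : seq (seq Al), forall w : seq Al, exists2 r, r \in reps & wsim C chr w r).
Proof.
split.
  move=> [P [HP [E HE]]]; exists E => x.
  elim/(well_founded_induction lt_wf): x => x IH.
  case hh: (has (fun p => infix p.2 x) P); last first.
    exists x; last by [].
    apply: HE => p hp; apply/negP => hi; move/negP: hh; apply.
    by apply/hasP; exists p.
  move/hasP: hh => [p hp /infixP [s [s' hx]]]; subst x.
  have [hl hs] := HP p hp.
  have [r hr hsr] := IH _ (lt_compat s s' _ _ hl).
  exists r => //; apply: wsim_trans hsr.
  exact: wsim_sym (wsim_congr s s' hs).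
move=> [reps Hreps].
have [Irr HI] := fin_irr C chr lt_noanti reps.
have [P [H1 H2]] := mkP C chr lt ([::] :: [seq rcons w a | w <- Irr, a <- enum Al]).
exists P; split => //; exists Irr.
suff: forall x, (forall p, p \in P -> ~~ infix p.2 x) -> ~ red C chr lt x.
  by move=> h x hx; apply: HI (h x hx) (Hreps x).
elim/last_ind => [|x a IH] hx hr.
  have [p hp e] := H2 [::] (mem_head _ _) hr.
  by move: (hx p hp); rewrite e infix0s.
have hx' : forall p, p \in P -> ~~ infix p.2 x.
  move=> p hp; apply/negP => hi; move: (hx p hp); rewrite (infix_trans hi) //.
  exact: infix_rcons.
have xI := HI x (IH hx') (Hreps x).
have hc : rcons x a \in [::] :: [seq rcons w a | w <- Irr, a <- enum Al].
  rewrite in_cons; apply/orP; right; apply/allpairsP; exists (x, a) => /=.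
  by rewrite mem_enum.
have [p hp e] := H2 _ hc hr.
by move: (hx p hp); rewrite e infix_refl.
Qed.
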